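(* Let $\Phi$ be a join doctrine. The following are equivalent: (i) for every complete lattice $X$, $\Phi(X)\subseteq\mathcal{L}(X)$ is closed under arbitrary intersections (meets in $\mathcal{L}(X)$); (ii) for every poset $X$, $\Phi(\mathcal{L}(X))\subseteq\mathcal{L}(\mathcal{L}(X))$ is closed under arbitrary intersections; (iii) for every poset $X$, the complete lattice $\mathcal{L}(X)$ is $\Phi$-continuous.
   Context: A join doctrine is a class $\Phi$ of posets such that: (1) the one-element poset is in $\Phi$; (2) if a poset $P$ is the union of a set $\mathcal{S}$ of subposets each in $\Phi$ and $\mathcal{S}$ (ordered by inclusion) is in $\Phi$, then $P\in\Phi$; (3) if $f:P\to Q$ is monotone with cofinal image and $P\in\Phi$ then $Q\in\Phi$; (4) cofinal subposets of members of $\Phi$ are in $\Phi$. For a poset $X$, $\mathcal{L}(X)$ is the complete lattice of lower subsets of $X$ ordered by inclusion, and $\Phi(X)\subseteq\mathcal{L}(X)$ is the set of lower subsets which, as subposets, belong to $\Phi$. For a poset $X$ with all joins of subsets in $\Phi$, and $x\in X$: $\Downarrow x:=\bigcap\{\phi\in\Phi(X)\mid x\le\bigvee\phi\}$. $X$ is $\Phi$-continuous if for each $x$ there is $\phi\in\Phi(X)$ with $\phi\subseteq\Downarrow x$ and $x\le\bigvee\phi$. *)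

(* Defs.v *)
From Stdlib Require Import FunctionalExtensionality PropExtensionality ProofIrrelevance.

Set Implicit Arguments.

Record Poset := {
  carrier :> Type;
  le : carrier -> carrier -> Prop;
  le_refl : forall x, le x x;
  le_antisym : forall x y, le x y -> le y x -> x = y;
  le_trans : forall x y z, le x y -> le y z -> le x z
}.

Arguments le {p} _ _.

Definition one_poset : Poset.
Proof.
  refine {| carrier := unit; le := fun _ _ => True |}.
  - now intros.
  - intros [] [] _ _; reflexivity.
  - now intros.
Defined.

Definition subposet (P : Poset) (A : P -> Prop) : Poset.
Proof.
  refine {| carrier := {x : P | A x}; le := fun x y => le (proj1_sig x) (proj1_sig y) |}.
  - intros x; apply le_refl.
  - intros [x hx] [y hy] h1 h2; simpl in *.
    pose proof (le_antisym P x y h1 h2) as e; subst y.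
    f_equal; apply proof_irrelevance.
  - intros x y z; apply le_trans.
Defined.

Definition incl_poset (T : Type) : Poset.
Proof.
  refine {| carrier := T -> Prop; le := fun A B => forall x, A x -> B x |}.
  - now intros.
  - intros A B h1 h2; apply functional_extensionality; intros x;
      apply propositional_extensionality; split; auto.
  - intros A B C h1 h2 x hx; auto.
Defined.

Definition is_lower {X : Poset} (A : X -> Prop) : Prop :=
  forall x y : X, le x y -> A y -> A x.

Definition LowerSets (X : Poset) : Poset := subposet (incl_poset X) (fun A : X -> Prop => @is_lower X A).

Definition cofinal {P : Poset} (A : P -> Prop) : Prop :=
  forall p : P, exists a : P, A a /\ le p a.

Definition monotone {P Q : Poset} (f : P -> Q) : Prop :=
  forall x y : P, le x y -> le (f x) (f y).

Definition join_doctrine (Phi : Poset -> Prop) : Prop :=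
  Phi one_poset /\
  (forall (P : Poset) (S : (P -> Prop) -> Prop),
      (forall x : P, exists A, S A /\ A x) ->
      (forall A, S A -> Phi (subposet P A)) ->
      Phi (subposet (incl_poset P) S) ->
      Phi P) /\
  (forall (P Q : Poset) (f : P -> Q),
      monotone f -> cofinal (fun q : Q => exists p, q = f p) -> Phi P -> Phi Q) /\
  (forall (P : Poset) (A : P -> Prop), cofinal A -> Phi P -> Phi (subposet P A)).

Definition inPhi (Phi : Poset -> Prop) (X : Poset) (A : X -> Prop) : Prop :=
  is_lower A /\ Phi (subposet X A).

Definition is_ub {X : Poset} (A : X -> Prop) (s : X) : Prop :=
  forall a, A a -> le a s.
Definition is_lub {X : Poset} (A : X -> Prop) (s : X) : Prop :=
  is_ub A s /\ forall t, is_ub A t -> le s t.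

Definition complete_lattice (X : Poset) : Prop :=
  forall A : X -> Prop, exists s, is_lub A s.

Definition Phi_closed_under_intersections (Phi : Poset -> Prop) (X : Poset) : Prop :=
  forall F : (X -> Prop) -> Prop,
    (forall A, F A -> inPhi Phi X A) ->
    inPhi Phi X (fun x => forall A, F A -> A x).

Definition le_join {X : Poset} (x : X) (A : X -> Prop) : Prop :=
  exists s, is_lub A s /\ le x s.

Definition way_below (Phi : Poset -> Prop) (X : Poset) (x : X) : X -> Prop :=
  fun y => forall A, inPhi Phi X A -> le_join x A -> A y.

Definition Phi_continuous (Phi : Poset -> Prop) (X : Poset) : Prop :=
  forall x : X, exists A, inPhi Phi X A /\
    (forall y, A y -> way_below Phi X x y) /\ le_join x A.

(* Main.v *)
Require Import Defs.
From Stdlib Require Import ClassicalEpsilon.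

Definition LU (X : Poset) (A : LowerSets X -> Prop) : LowerSets X.
Proof.
  refine (exist _ (fun x => exists B : LowerSets X, A B /\ proj1_sig B x) _).
  intros x y hxy [B [hB hy]]. exists B. split; auto. exact (proj2_sig B x y hxy hy).
Defined.

Lemma LU_lub X A : is_lub A (LU X A).
Proof.
  split.
  - intros a ha x hx. exists a. auto.
  - intros t ht x [B [hB hx]]. exact (ht B hB x hx).
Qed.

Lemma lub_le_LU X A s : is_lub A s -> le s (LU X A).
Proof. intros [_ h]. apply h. apply LU_lub. Qed.

Lemma LowerSets_complete X : complete_lattice (LowerSets X).
Proof. intros A. exists (LU X A). apply LU_lub. Qed.

Definition pdown (P : Poset) (a : P) : LowerSets P.
Proof.
  refine (exist _ (fun p => le p a) _).
  intros x y hxy hy. exact (le_trans _ _ _ _ hxy hy).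
Defined.

Lemma ii_iii Phi X : Phi_closed_under_intersections Phi (LowerSets X) ->
  Phi_continuous Phi (LowerSets X).
Proof.
  intros H x.
  set (F := fun A => inPhi Phi (LowerSets X) A /\ le_join x A).
  exists (fun y => forall A, F A -> A y). split; [|split].
  - apply H. intros A [hA _]. exact hA.
  - intros y hy A hA hj. apply hy. split; assumption.
  - exists (LU X (fun y => forall A, F A -> A y)). split; [apply LU_lub|].
    intros a ha. exists (pdown X a). split; [| apply le_refl].
    intros A [[hlow _] [s [hs hxs]]].
    destruct (lub_le_LU X A s hs a (hxs a ha)) as [C [hC hCa]].
    apply (hlow (pdown X a) C); [|exact hC].
    intros b hb. exact (proj2_sig C b a hb hCa).
Qed.

Definition pdownS (X : Poset) (psi : X -> Prop) (a : X) : LowerSets (subposet X psi).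
Proof.
  refine (exist _ (fun p : subposet X psi => le (proj1_sig p) a) _).
  intros x y hxy hy. exact (le_trans X _ _ _ hxy hy).
Defined.

Lemma iii_i Phi
  (H3 : forall (P Q : Poset) (f : P -> Q), monotone f ->
        cofinal (fun q : Q => exists p, q = f p) -> Phi P -> Phi Q) :
  (forall X, Phi_continuous Phi (LowerSets X)) ->
  forall X, complete_lattice X -> Phi_closed_under_intersections Phi X.
Proof.
  intros Hc X HX F HF.
  set (psi := fun x : X => forall A, F A -> A x).
  assert (Hlow : is_lower psi).
  { intros x y hxy hy A hA. exact (proj1 (HF A hA) x y hxy (hy A hA)). }
  split; [exact Hlow|].
  set (P := subposet X psi).
  pose (sup := fun (z : LowerSets P) => proj1_sig (constructive_indefinite_description _
      (HX (fun x : X => exists p : P, proj1_sig z p /\ proj1_sig p = x)))).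
  assert (Hsup : forall z, is_lub (fun x : X => exists p : P, proj1_sig z p /\ proj1_sig p = x) (sup z)).
  { intro z. exact (proj2_sig (constructive_indefinite_description _ _)). }
  assert (Hmono : forall z z' : LowerSets P, le z z' -> le (sup z) (sup z')).
  { intros z z' hzz. apply (proj2 (Hsup z)). intros x [p [hp <-]].
    apply (proj1 (Hsup z')). exists p. split; auto. }
  assert (Hin : forall (p : P) z, proj1_sig z p -> le (proj1_sig p) (sup z)).
  { intros p z hp. apply (proj1 (Hsup z)). exists p. auto. }
  assert (Hsd : forall a, le (sup (pdownS X psi a)) a).
  { intros a. apply (proj2 (Hsup _)). intros x [p [hp <-]]. exact hp. }
  assert (Hchi : forall A, F A -> inPhi Phi (LowerSets P) (fun z => A (sup z))).
  { intros A hA. destruct (HF A hA) as [hAl hAP]. split.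
    - intros z z' hzz hz'. exact (hAl _ _ (Hmono z z' hzz) hz').
    - unshelve eapply (H3 (subposet X A) (subposet (LowerSets P) (fun z => A (sup z)))
        (fun a => exist (fun z : LowerSets P => A (sup z)) (pdownS X psi (proj1_sig a)) _) _ _ hAP).
      + exact (hAl _ _ (Hsd _) (proj2_sig a)).
      + intros a b hab p hp. exact (le_trans _ _ _ _ hp hab).
      + intros [z hz]. eexists. split.
        * exists (exist _ (sup z) hz). reflexivity.
        * intros p hp. exact (Hin p z hp). }
  assert (Htop : is_lower (fun _ : P => True)) by (intros x y _ _; exact I).
  destruct (Hc P (exist _ (fun _ => True) Htop)) as [B [[_ hBP] [hBw hBj]]].
  assert (HB : forall y, B y -> psi (sup y)).
  { intros y hy A hA. apply (hBw y hy (fun z => A (sup z)) (Hchi A hA)).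
    exists (LU P (fun z => A (sup z))). split; [apply LU_lub|].
    intros p _. exists (pdownS X psi (proj1_sig p)). split.
    - destruct (HF A hA) as [hAl _]. exact (hAl _ _ (Hsd _) (proj2_sig p A hA)).
    - apply le_refl. }
  unshelve eapply (H3 (subposet (LowerSets P) B) P
     (fun y => exist psi (sup (proj1_sig y)) (HB _ (proj2_sig y))) _ _ hBP).
  - intros y y' hyy. exact (Hmono _ _ hyy).
  - intros q. destruct hBj as [s [hs hts]].
    destruct (lub_le_LU P B s hs q (hts q I)) as [C [hC hCq]].
    eexists. split.
    + exists (exist _ C hC). reflexivity.
    + exact (Hin q C hCq).
Qed.

Theorem proposition2p8 (Phi : Poset -> Prop) (HPhi : join_doctrine Phi) :
  ((forall X : Poset, complete_lattice X -> Phi_closed_under_intersections Phi X) <->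
   (forall X : Poset, Phi_closed_under_intersections Phi (LowerSets X))) /\
  ((forall X : Poset, Phi_closed_under_intersections Phi (LowerSets X)) <->
   (forall X : Poset, Phi_continuous Phi (LowerSets X))).
Proof.
  destruct HPhi as [_ [_ [H3 _]]].
  assert (i_ii : (forall X : Poset, complete_lattice X -> Phi_closed_under_intersections Phi X) ->
    forall X : Poset, Phi_closed_under_intersections Phi (LowerSets X)).
  { intros H X. apply H. apply LowerSets_complete. }
  split; split.
  - exact i_ii.
  - intros H. apply (iii_i Phi H3). intros X. apply ii_iii. apply H.
  - intros H X. apply ii_iii. apply H.
  - intros H. apply i_ii. apply (iii_i Phi H3 H).
Qed.
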